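(* Let $G$ be a saturated graph with $mp(G) = k$, and let $H$ be the graph obtained from $G$ by adding a new vertex $v$ adjacent to all vertices of $G$. Then $mp(H) = k+1$ and $H$ is saturated.
   Context: All graphs are finite and simple. A degree monotone path in a graph $G$ is a path $v_1v_2\ldots v_m$ such that $\deg(v_1)\le \cdots\le \deg(v_m)$ or $\deg(v_1)\ge \cdots\ge \deg(v_m)$; its length is its number of vertices. $mp(G)$ denotes the maximum length of a degree monotone path in $G$. A graph $G$ is saturated if $mp(G+e)>mp(G)$ for every pair $e$ of non-adjacent vertices of $G$, where $G+e$ is $G$ with the edge $e$ added. *)

(* Defs.v *)
From mathcomp Require Import all_boot.
Set Implicit Arguments. Unset Strict Implicit. Unset Printing Implicit Defensive.

(* A finite simple graph: vertex type T : finType, adjacency e : rel T,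
   assumed symmetric and irreflexive (hypotheses of the theorem). *)

Definition deg (T : finType) (e : rel T) (x : T) : nat := #|[set y | e x y]|.

Definition is_dmp (T : finType) (e : rel T) (p : seq T) : bool :=
  [&& p != [::], uniq p,
      match p with [::] => true | x :: q => path e x q end &
      (sorted (fun a b => deg e a <= deg e b) p
       || sorted (fun a b => deg e a >= deg e b) p)].

(* mp(G): maximum number of vertices of a degree monotone path
   (0 if G has no vertices). A path has at most #|T| vertices. *)
Definition mp (T : finType) (e : rel T) : nat :=
  \max_(n < #|T|.+1 | [exists p : n.-tuple T, is_dmp e p]) n.

Definition add_edge (T : finType) (e : rel T) (x y : T) : rel T :=
  fun a b => [|| e a b, (a == x) && (b == y) | (a == y) && (b == x)].

Definition saturated (T : finType) (e : rel T) : Prop :=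
  forall x y : T, x != y -> ~~ e x y -> mp e < mp (add_edge e x y).

Definition cone (T : finType) (e : rel T) : rel (option T) :=
  fun a b => match a, b with
             | Some x, Some y => e x y
             | None, Some _ | Some _, None => true
             | None, None => false
             end.

(* Main.v *)
Require Import Defs.
From mathcomp Require Import all_boot.
From Stdlib Require Import FunctionalExtensionality.

Set Implicit Arguments. Unset Strict Implicit. Unset Printing Implicit Defensive.

Section S.
Variable T : finType.

Lemma mp_ge (e : rel T) p : is_dmp e p -> size p <= mp e.
Proof.
move=> H; have hu : uniq p by case/and4P: H.
have hs : size p < #|T|.+1.
  by have /card_uniqP <- := hu; rewrite ltnS max_card.
apply: (leq_trans _ (leq_bigmax_cond (Ordinal hs) _)) => //=.
by apply/existsP; exists (in_tuple p).
Qed.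

Lemma mp_le (e : rel T) m : (forall p, is_dmp e p -> size p <= m) -> mp e <= m.
Proof.
move=> H; apply/bigmax_leqP => i /existsP [t Ht].
by rewrite -(size_tuple t); exact: H.
Qed.

Lemma mp_wit (e : rel T) : mp e = 0 \/ exists p, is_dmp e p /\ size p = mp e.
Proof.
case: (pickP (fun n : 'I_#|T|.+1 => [exists p : n.-tuple T, is_dmp e p])) => [i0 Pi0|none].
  right; rewrite /mp (bigmax_eq_arg i0 Pi0); case: arg_maxnP => //= j /existsP [t Ht] _.
  by exists t; rewrite size_tuple.
by left; rewrite /mp big_pred0.
Qed.

End S.
Section S2.
Variable T : finType.

Lemma deg_cone_some (e : rel T) x : deg (cone e) (Some x) = (deg e x).+1.
Proof.
rewrite /deg.
have -> : [set y | cone e (Some x) y] = None |: [set Some z | z in [set z | e x z]].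
  apply/setP => -[y|]; rewrite !inE /=.
    by rewrite (mem_imset _ _ (@Some_inj _)) inE.
  by [].
rewrite cardsU1 card_imset; last exact: Some_inj.
have -> : (None \notin [set Some z | z in [set z | e x z]]) = true.
  by apply/negP => /imsetP [].
by [].
Qed.

Lemma deg_cone_none (e : rel T) : deg (cone e) None = #|T|.
Proof.
rewrite /deg.
have -> : [set y | cone e None y] = [set~ None].
  by apply/setP => -[y|]; rewrite !inE.
by rewrite cardsC1 card_option.
Qed.

Lemma deg_lt (e : rel T) x : irreflexive e -> deg e x < #|T|.
Proof.
move=> irr; have h0 : 0 < #|T| by apply/card_gt0P; exists x.
have : deg e x <= #|[set~ x]|.
  apply: subset_leq_card; apply/subsetP => y; rewrite !inE.
  by apply: contraL => /eqP ->; rewrite irr.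
by rewrite cardsC1; case: #|T| h0.
Qed.

Lemma univ_adj (e : rel T) x y : irreflexive e -> deg e y = #|T|.-1 -> x != y -> e y x.
Proof.
move=> irr hd hxy.
have hs : [set z | e y z] \subset [set~ y].
  by apply/subsetP => z; rewrite !inE; apply: contraL => /eqP ->; rewrite irr.
have := subset_cardP _ hs; rewrite cardsC1 -hd => /(_ erefl) /(_ x).
by rewrite !inE hxy.
Qed.

Lemma path_cone (e : rel T) x q : path (cone e) (Some x) (map Some q) = path e x q.
Proof. by elim: q x => //= y q IH x; rewrite IH. Qed.

Lemma sorted_cone (e : rel T) s : sorted (cone e) (map Some s) = sorted e s.
Proof. by case: s => //= x s; rewrite path_cone. Qed.

Lemma sorted_cone_le (e : rel T) s :
  sorted (fun a b => deg (cone e) a <= deg (cone e) b) (map Some s) =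
  sorted (fun a b => deg e a <= deg e b) s.
Proof. by rewrite sorted_map; apply: eq_sorted => a b /=; rewrite !deg_cone_some. Qed.

Lemma sorted_cone_ge (e : rel T) s :
  sorted (fun a b => deg (cone e) a >= deg (cone e) b) (map Some s) =
  sorted (fun a b => deg e a >= deg e b) s.
Proof. by rewrite sorted_map; apply: eq_sorted => a b /=; rewrite !deg_cone_some. Qed.

Lemma dmp_cone (e : rel T) p : is_dmp (cone e) (map Some p) = is_dmp e p.
Proof.
rewrite /is_dmp (map_inj_uniq (@Some_inj _)) sorted_cone_le sorted_cone_ge.
by case: p => //= x p; rewrite path_cone.
Qed.

Lemma notin_map_None (s : seq T) : None \notin map Some s.
Proof. by apply/mapP => -[]. Qed.

Lemma cone_lower (e : rel T) : irreflexive e -> (mp e).+1 <= mp (cone e).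
Proof.
move=> irr; case: (mp_wit e) => [->|[p [hp <-]]].
  have : is_dmp (cone e) [:: None] by [].
  by move/mp_ge.
have hp' := hp; rewrite -dmp_cone in hp'.
case/and4P: hp' => hne hu hpath /orP [hle|hge].
- have : is_dmp (cone e) (rcons (map Some p) None).
    apply/and4P; split.
    + by case: (map Some p).
    + by rewrite rcons_uniq notin_map_None.
    + case: p {hp hne hu hle} hpath => //= x p.
      by rewrite rcons_path => -> /=; rewrite last_map.
    + apply/orP; left; case: p {hp hne hu hpath} hle => //= x p.
      rewrite rcons_path => -> /=; rewrite last_map deg_cone_some deg_cone_none.
      exact: deg_lt.
  by move/mp_ge; rewrite size_rcons size_map.
- have : is_dmp (cone e) (None :: map Some p).
    apply/and4P; split => //.
    + by rewrite /= notin_map_None.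
    + by case: p {hp hne hu hge} hpath.
    + apply/orP; right; case: p {hp hne hu hpath} hge => //= x p ->.
      by rewrite deg_cone_some deg_cone_none (deg_lt _ irr).
  by move/mp_ge; rewrite /= size_map.
Qed.

Lemma pmap_Some (q : seq (option T)) : None \notin q -> map Some (pmap id q) = q.
Proof.
elim: q => // -[x|] q IH; rewrite in_cons //= => h.
by rewrite IH.
Qed.

Lemma aux_eq d n : d < n -> n <= d.+1 -> d = n.-1.
Proof. by case: n => // n; rewrite !ltnS /= => a b; apply/eqP; rewrite eqn_leq a b. Qed.

Lemma cone_upper (e : rel T) : symmetric e -> irreflexive e ->
  mp (cone e) <= (mp e).+1.
Proof.
move=> sym irr; apply: mp_le => q hq.
case: (boolP (None \in q)) => hN; last first.
  have E := pmap_Some hN; rewrite -E dmp_cone in hq; rewrite -E size_map.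
  by apply: leqW; apply: mp_ge.
case/splitPr: hN hq => q1 q2 hq.
have hu : uniq (q1 ++ None :: q2) by case/and4P: hq.
have hsub : subseq (q1 ++ q2) (q1 ++ None :: q2).
  by apply: cat_subseq => //; apply: subseq_cons.
have h1 : None \notin q1.
  by move: hu; rewrite cat_uniq => /and3P [_ /hasPn /= h _]; apply: contra (h None (mem_head _ _)) => ->.
have h2 : None \notin q2.
  by move: hu; rewrite cat_uniq => /and3P [_ _ /= /andP [] ].
rewrite -(pmap_Some h1) -(pmap_Some h2) in hq hsub hu *.
set a := pmap id q1 in hq hsub hu *; set b := pmap id q2 in hq hsub hu *.
clearbody a b.
rewrite size_cat /= !size_map addnS ltnS -size_cat.
case hab : (a ++ b) => [|z w]; first by [].
rewrite -hab; apply: mp_ge; rewrite -dmp_cone map_cat.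
case/and4P: hq => _ _ hpath hmono.
have tle : transitive (fun a b : option T => deg (cone e) a <= deg (cone e) b).
  by move=> ? ? ? h h'; exact: leq_trans h h'.
have tge : transitive (fun a b : option T => deg (cone e) a >= deg (cone e) b).
  by move=> ? ? ? h h'; exact: leq_trans h' h.
apply/and4P; split.
- by rewrite -map_cat hab.
- exact: subseq_uniq hsub hu.
- change (sorted (cone e) (map Some a ++ map Some b)).
  change (is_true (sorted (cone e) (map Some a ++ None :: map Some b))) in hpath.
  rewrite -map_cat sorted_cone.
  case/lastP: a hsub hu hab hpath hmono => [|a' x] hsub hu hab hpath hmono.
    by move: hpath => /= /path_sorted; rewrite sorted_cone.
  case: b hsub hu hab hpath hmono => [|y b'] hsub hu hab hpath hmono.
    by rewrite cats0; move: hpath => /cat_sorted2 [+ _]; rewrite sorted_cone.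
  move: hpath; rewrite sorted_cat_cons -cats1 => /andP [/cat_sorted2 [hs1 _] hs2].
  rewrite sorted_cone in hs1; rewrite /= path_cone in hs2.
  rewrite sorted_cat_cons hs2 andbT -!cats1 -catA /= sorted_cat_cons hs1 /= andbT.
  have hsub3 : subseq [:: Some x; None; Some y]
      (map Some (rcons a' x) ++ None :: map Some (y :: b')).
    rewrite -[[:: Some x; None; Some y]]/([:: Some x] ++ None :: [:: Some y]).
    apply: cat_subseq; first by rewrite sub1seq map_rcons mem_rcons mem_head.
    by rewrite /= eqxx sub0seq.
  have := subseq_uniq hsub3 hu; rewrite /= !inE /= andbT => hxy0.
  have hxy : x != y by apply: contra hxy0 => /eqP ->.
  have dx := deg_lt x irr; have dy := deg_lt y irr.
  case/orP: hmono => hm.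
  + have := subseq_sorted tle hsub3 hm; rewrite /= !deg_cone_some deg_cone_none.
    move=> /andP [_ /andP [h _]].
    rewrite sym; apply: univ_adj => //; exact: aux_eq.
  + have := subseq_sorted tge hsub3 hm; rewrite /= !deg_cone_some deg_cone_none.
    move=> /andP [h _].
    apply: univ_adj => //; [exact: aux_eq | by rewrite eq_sym].
- case/orP: hmono => h; apply/orP; [left|right]; exact: subseq_sorted hsub h.
Qed.
End S2.

Lemma add_edge_cone (T : finType) (e : rel T) x y :
  add_edge (cone e) (Some x) (Some y) = cone (add_edge e x y).
Proof.
apply: functional_extensionality => a; apply: functional_extensionality => b.
by case: a => [a|]; case: b => [b|].
Qed.

Theorem lemma2p6 (T : finType) (e : rel T) (k : nat) :
  symmetric e -> irreflexive e ->
  saturated e -> mp e = k ->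
  mp (cone e) = k.+1 /\ saturated (cone e).
Proof.
move=> sym irr sat <-.
have E : mp (cone e) = (mp e).+1.
  by apply/eqP; rewrite eqn_leq cone_upper // cone_lower.
split => //.
move=> [x|] [y|] //= hne hadj.
have hxy : x != y by apply: contra hne => /eqP ->.
rewrite E add_edge_cone.
apply: leq_trans (cone_lower _); first by rewrite ltnS; exact: sat.
move=> z; rewrite /add_edge irr /=.
by apply/negP => /orP [] /andP [/eqP -> /eqP h]; move: hxy; rewrite h eqxx.
Qed.
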